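(* Let $\mathcal M=(W,W_\bot,\preccurlyeq,\sqsubseteq,V)$ be a bi-intuitionistic model of finite height $n$, and let $\Sigma$ be a finite set of formulas with $\#\Sigma=s$. Then the number of $\sim_\Sigma$-equivalence classes satisfies $\#(W/{\sim_\Sigma})\le 2^{2(n+1)s}_{n+2}$.
   Context: Formulas: $p\mid\bot\mid\varphi\wedge\psi\mid\varphi\vee\psi\mid\varphi\to\psi\mid\Diamond\varphi\mid\Box\varphi$ over a countably infinite set $\mathbb P$. A bi-intuitionistic model $(W,W_\bot,\preccurlyeq,\sqsubseteq,V)$: $\preccurlyeq,\sqsubseteq$ preorders on $W$, $W_\bot$ upward closed under both, $V:\mathbb P\to2^W$ with $V(p)$ $\preccurlyeq$-upward closed and $\supseteq W_\bot$. Satisfaction: $p$ iff $w\in V(p)$; $\bot$ iff $w\in W_\bot$; $\wedge,\vee$ pointwise; $w\models\varphi\to\psi$ iff for all $v\succcurlyeq w$, $v\models\varphi$ implies $v\models\psi$; $w\models\Diamond\varphi$ iff for all $u\succcurlyeq w$ there is $v\sqsupseteq u$ with $v\models\varphi$; $w\models\Box\varphi$ iff $v\models\varphi$ whenever $w\preccurlyeq u\sqsubseteq v$. $w\prec v$ means $w\preccurlyeq v$ and $v\not\preccurlyeq w$. The height of $w$ is the supremum of $n$ such that there is a chain $w=w_0\prec\cdots\prec w_n$; the height of $\mathcal M$ is the supremum of heights of its worlds. For $R\subseteq W\times W$: forward confluent if $w\preccurlyeq w'$, $wRv$ imply some $v'$ with $v\preccurlyeq v'$, $w'Rv'$; backward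 confluent if $wRv\preccurlyeq v'$ implies some $w'$ with $w\preccurlyeq w'Rv'$. The $\Sigma$-label of $w$ is $\ell(w)=(\ell^+(w);\ell^\Diamond(w))$ with $\ell^+(w)=\{\varphi\in\Sigma:(\mathcal M,w)\models\varphi\}$, $\ell^\Diamond(w)=\{\varphi\in\Sigma:\forall v\sqsupseteq w,\ (\mathcal M,v)\not\models\varphi\}$. A $\Sigma$-bisimulation is a forward and backward confluent $Z\subseteq W\times W$ with $wZv\Rightarrow\ell(w)=\ell(v)$; $\sim_\Sigma$ is the greatest $\Sigma$-bisimulation (the union of all of them), which is an equivalence relation. Superexponential: $2^x_0=x$ and $2^x_{y+1}=2^{2^x_y}$. *)

(* Defs.v *)
From Stdlib Require Import Arith List.
Import ListNotations.

Inductive form : Type :=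
| Var : nat -> form
| Bot : form
| And : form -> form -> form
| Or : form -> form -> form
| Imp : form -> form -> form
| Dia : form -> form
| Box : form -> form.

Definition preorder {W : Type} (R : W -> W -> Prop) : Prop :=
  (forall w, R w w) /\ (forall u v w, R u v -> R v w -> R u w).

Record model : Type := Model {
  world : Type;
  wbot : world -> Prop;
  ile : world -> world -> Prop;
  mle : world -> world -> Prop;
  val : nat -> world -> Prop;
  ile_pre : preorder ile;
  mle_pre : preorder mle;
  wbot_up_ile : forall w v, wbot w -> ile w v -> wbot v;
  wbot_up_mle : forall w v, wbot w -> mle w v -> wbot v;
  val_up : forall p w v, val p w -> ile w v -> val p v;
  val_bot : forall p w, wbot w -> val p w
}.

Fixpoint sat (M : model) (phi : form) : world M -> Prop :=
  match phi with
  | Var p => fun w => val M p w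
  | Bot => fun w => wbot M w
  | And a b => fun w => sat M a w /\ sat M b w
  | Or a b => fun w => sat M a w \/ sat M b w
  | Imp a b => fun w => forall v, ile M w v -> sat M a v -> sat M b v
  | Dia a => fun w => forall u, ile M w u -> exists v, mle M u v /\ sat M a v
  | Box a => fun w => forall u v, ile M w u -> mle M u v -> sat M a v
  end.

Definition slt (M : model) (w v : world M) : Prop := ile M w v /\ ~ ile M v w.

Definition strict_chain (M : model) (c : nat -> world M) (k : nat) : Prop :=
  forall i, i < k -> slt M (c i) (c (S i)).

(* The height of M (sup over worlds of the sup of chain lengths, with sup ∅ = 0)
   equals n. *)
Definition model_height (M : model) (n : nat) : Prop :=
  (forall c k, strict_chain M c k -> k <= n) /\
  (n = 0 \/ exists c, strict_chain M c n).

(* Σ-label equality: ℓ⁺ and ℓ^◇ agree on Σ. *)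
Definition label_eq (M : model) (Sigma : list form) (w v : world M) : Prop :=
  (forall phi, In phi Sigma -> (sat M phi w <-> sat M phi v)) /\
  (forall phi, In phi Sigma ->
     ((forall u, mle M w u -> ~ sat M phi u) <-> (forall u, mle M v u -> ~ sat M phi u))).

Definition forward_confluent (M : model) (R : world M -> world M -> Prop) : Prop :=
  forall w w' v, ile M w w' -> R w v -> exists v', ile M v v' /\ R w' v'.

Definition backward_confluent (M : model) (R : world M -> world M -> Prop) : Prop :=
  forall w v v', R w v -> ile M v v' -> exists w', ile M w w' /\ R w' v'.

Definition bisimulation (M : model) (Sigma : list form)
  (Z : world M -> world M -> Prop) : Prop :=
  forward_confluent M Z /\ backward_confluent M Z /\
  (forall w v, Z w v -> label_eq M Sigma w v).

Definition bisim_equiv (M : model) (Sigma : list form) (w v : world M) : Prop :=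
  exists Z, bisimulation M Sigma Z /\ Z w v.

Fixpoint sexp (x y : nat) : nat :=
  match y with
  | 0 => x
  | S y' => 2 ^ (sexp x y')
  end.

(* Main.v *)
Require Import Defs.
From Stdlib Require Import Arith List ClassicalEpsilon Classical Lia.

Definition asb (P : Prop) : bool := if excluded_middle_informative P then true else false.
Lemma asbP P : asb P = true <-> P.
Proof. unfold asb; destruct (excluded_middle_informative P); split; intros; auto; discriminate || contradiction. Qed.
Lemma asb_eq P Q : asb P = asb Q -> (P <-> Q).
Proof. intros H; rewrite <- (asbP P), <- (asbP Q), H; tauto. Qed.

Fixpoint enc (f : nat -> bool) (B : nat) : nat :=
  match B with 0 => 0 | S B' => 2 * enc f B' + (if f B' then 1 else 0) end.

Lemma enc_lt f B : enc f B < 2 ^ B.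
Proof. induction B; simpl; [lia|]. destruct (f B); lia. Qed.

Lemma enc_inj f g B : enc f B = enc g B -> forall i, i < B -> f i = g i.
Proof.
  induction B; simpl; intros H i Hi; [lia|].
  assert (Hx : enc f B = enc g B /\ (if f B then 1 else 0) = (if g B then 1 else 0)).
  { destruct (f B), (g B); lia. }
  destruct Hx as [H1 H2].
  destruct (Nat.eq_dec i B) as [->|Hne].
  - destruct (f B), (g B); simpl in H2; congruence.
  - apply IHB; auto; lia.
Qed.

Lemma pair_lt a b A B : a < A -> b < B -> a * B + b < A * B.
Proof. intros; nia. Qed.
Lemma pair_inj a b a' b' B : b < B -> b' < B -> a * B + b = a' * B + b' -> a = a' /\ b = b'.
Proof. intros H1 H2 H3. apply (Nat.div_mod_unique B); auto. lia. Qed.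

Definition cover {W : Type} (R : W -> W -> Prop) (N : nat) : Prop :=
  exists l : list W, length l <= N /\ forall w, exists i v, nth_error l i = Some v /\ R w v.

Lemma cover_mono {W} (R : W -> W -> Prop) N N' : N <= N' -> cover R N -> cover R N'.
Proof. intros H [l [H1 H2]]; exists l; split; auto; lia. Qed.

Lemma code_cover {W : Type} (R : W -> W -> Prop) (code : W -> nat) N :
  (forall w, code w < N) -> (forall w v, code w = code v -> R w v) -> cover R N.
Proof.
  intros Hlt Hc.
  destruct (classic (inhabited W)) as [[w0]|Hn].
  - set (g := fun c => match excluded_middle_informative (exists w, code w = c) with
                       | left H => proj1_sig (constructive_indefinite_description _ H)
                       | right _ => w0 end).
    exists (map g (seq 0 N)); split; [rewrite length_map, length_seq; lia|].
    intros w. exists (code w), (g (code w)). split.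
    + rewrite nth_error_map, nth_error_seq.
      destruct (Nat.ltb_spec (code w) N); [|specialize (Hlt w); lia]. simpl. reflexivity.
    + unfold g. destruct (excluded_middle_informative _) as [H|H].
      * destruct (constructive_indefinite_description _ H) as [x Hx]; simpl.
        apply Hc; auto.
      * exfalso; apply H; eauto.
  - exists nil; split; simpl; [lia|]. intros w; exfalso; apply Hn; constructor; exact w.
Qed.

Definition F {W : Type} (R nx : W -> W -> Prop) (w v : W) : Prop :=
  (forall u, nx w u -> exists u', nx v u' /\ R u u') /\
  (forall u', nx v u' -> exists u, nx w u /\ R u u').

Definition equiv {W : Type} (R : W -> W -> Prop) : Prop :=
  (forall w v, R w v -> R v w) /\ (forall u v w, R u v -> R v w -> R u w).

Lemma step_cover {W : Type} (R0 R nx : W -> W -> Prop) A B :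
  equiv R0 -> equiv R -> cover R0 A -> cover R B ->
  cover (fun w v => R0 w v /\ F R nx w v) (A * 2 ^ B).
Proof.
  intros [S0 T0] [S1 T1] [l0 [L0 C0]] [l [Ll Cl]].
  set (c0 := fun w => proj1_sig (constructive_indefinite_description _ (C0 w))).
  set (bits := fun w i => asb (exists u, nx w u /\ exists v, nth_error l i = Some v /\ R u v)).
  apply (code_cover _ (fun w => c0 w * 2 ^ B + enc (bits w) B)).
  - intros w. apply pair_lt; [|apply enc_lt].
    unfold c0; destruct (constructive_indefinite_description _ (C0 w)) as [i [v [Hv Rv]]]; simpl.
    assert (i < length l0) by (apply nth_error_Some; congruence). lia.
  - intros w v Heq. apply pair_inj in Heq; try apply enc_lt. destruct Heq as [Hc He].
    pose proof (enc_inj _ _ _ He) as Hb.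
    split.
    + revert Hc; unfold c0.
      destruct (constructive_indefinite_description _ (C0 w)) as [i [x [Hx Rx]]]; simpl.
      destruct (constructive_indefinite_description _ (C0 v)) as [j [y [Hy Ry]]]; simpl.
      intros ->. rewrite Hx in Hy; inversion Hy; subst. eauto.
    + assert (key : forall a b, (forall i, i < B -> bits a i = bits b i) ->
                forall u, nx a u -> exists u', nx b u' /\ R u u').
      { intros a b Hab u Hu. destruct (Cl u) as [i [x [Hx Rx]]].
        assert (Hi : i < length l) by (apply nth_error_Some; congruence).
        assert (Hb1 : bits a i = true) by (apply asbP; eauto).
        rewrite Hab in Hb1 by lia. unfold bits in Hb1. apply (proj1 (asbP _)) in Hb1.
        destruct Hb1 as [u2 [Hu2 [y [Hy Ry]]]]. rewrite Hx in Hy; inversion Hy; subst.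
        exists u2; split; eauto. }
      split.
      * apply key; auto.
      * intros u' Hu'. destruct (key v w) with (u := u') as [u [H1 H2]]; auto.
        intros; symmetry; auto. exists u; split; auto.
Qed.

Lemma ile_refl M w : ile M w w. Proof. apply (proj1 (ile_pre M)). Qed.
Lemma ile_trans M u v w : ile M u v -> ile M v w -> ile M u w. Proof. apply (proj2 (ile_pre M)). Qed.
Lemma mle_refl M w : mle M w w. Proof. apply (proj1 (mle_pre M)). Qed.

Lemma persist M phi : forall w v, ile M w v -> sat M phi w -> sat M phi v.
Proof.
  induction phi; simpl; intros w v Hwv H.
  - eapply val_up; eauto.
  - eapply wbot_up_ile; eauto.
  - destruct H; split; eauto.
  - destruct H; [left|right]; eauto.
  - intros x Hx; apply H; eapply ile_trans; eauto.
  - intros x Hx; apply H; eapply ile_trans; eauto.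
  - intros x y Hx Hy; eapply H; [eapply ile_trans; eauto|eauto].
Qed.

Definition clus M (w v : world M) := ile M w v /\ ile M v w.

Definition T0 M Sigma (w v : world M) := label_eq M Sigma w v /\ F (label_eq M Sigma) (clus M) w v.

Fixpoint T M Sigma (k : nat) : world M -> world M -> Prop :=
  match k with
  | 0 => T0 M Sigma
  | S k => fun w v => T0 M Sigma w v /\ F (T M Sigma k) (slt M) w v
  end.

Lemma label_equiv M Sigma : equiv (label_eq M Sigma).
Proof.
  unfold label_eq; split.
  - intros w v [H1 H2]; split; intros phi Hp; [rewrite (H1 phi Hp)|rewrite (H2 phi Hp)]; tauto.
  - intros u v w [H1 H2] [H3 H4]; split; intros phi Hp;
      [rewrite (H1 phi Hp), (H3 phi Hp)|rewrite (H2 phi Hp), (H4 phi Hp)]; tauto.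
Qed.

Lemma F_sym {W} (R nx : W -> W -> Prop) : (forall w v, R w v -> R v w) ->
  forall w v, F R nx w v -> F R nx v w.
Proof.
  intros S w v [H1 H2]; split.
  - intros u Hu; destruct (H2 u Hu) as [x [Hx Rx]]; eauto.
  - intros u Hu; destruct (H1 u Hu) as [x [Hx Rx]]; eauto.
Qed.

Lemma F_trans {W} (R nx : W -> W -> Prop) : (forall u v w, R u v -> R v w -> R u w) ->
  forall u v w, F R nx u v -> F R nx v w -> F R nx u w.
Proof.
  intros Tr u v w [H1 H2] [H3 H4]; split.
  - intros x Hx; destruct (H1 x Hx) as [y [Hy Ry]]; destruct (H3 y Hy) as [z [Hz Rz]]; eauto.
  - intros x Hx; destruct (H4 x Hx) as [y [Hy Ry]]; destruct (H2 y Hy) as [z [Hz Rz]]; eauto.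
Qed.

Lemma T0_equiv M Sigma : equiv (T0 M Sigma).
Proof.
  destruct (label_equiv M Sigma) as [S Tr]; split.
  - intros w v [H1 H2]; split; eauto using F_sym.
  - intros u v w [H1 H2] [H3 H4]; split; eauto using F_trans.
Qed.

Lemma T_equiv M Sigma k : equiv (T M Sigma k).
Proof.
  induction k; simpl; [apply T0_equiv|].
  destruct (T0_equiv M Sigma) as [S Tr]; destruct IHk as [S' Tr']; split.
  - intros w v [H1 H2]; split; eauto using F_sym.
  - intros u v w [H1 H2] [H3 H4]; split; eauto using F_trans.
Qed.

Lemma T_T0 M Sigma k w v : T M Sigma k w v -> T0 M Sigma w v.
Proof. destruct k; simpl; tauto. Qed.

Lemma asb_ext P Q : (P <-> Q) -> asb P = asb Q.
Proof. intros H; unfold asb; destruct (excluded_middle_informative P), (excluded_middle_informative Q); tauto. Qed.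

Definition N0 s := 2 ^ s * 2 ^ s * 2 ^ (2 ^ s).
Fixpoint NN s k := match k with 0 => N0 s | S k => N0 s * 2 ^ (NN s k) end.

Lemma T0_cover M Sigma : cover (T0 M Sigma) (N0 (length Sigma)).
Proof.
  set (s := length Sigma).
  set (P := fun (w : world M) i => asb (sat M (nth i Sigma Bot) w)).
  set (D := fun (w : world M) i => asb (forall u, mle M w u -> ~ sat M (nth i Sigma Bot) u)).
  set (eD := fun w => enc (D w) s).
  set (Cs := fun w d => asb (exists u, clus M w u /\ eD u = d)).
  apply (code_cover _ (fun w => (enc (P w) s * 2 ^ s + eD w) * 2 ^ (2 ^ s) + enc (Cs w) (2 ^ s))).
  - intros w. unfold N0. apply pair_lt; [apply pair_lt|]; apply enc_lt.
  - intros w v Heq. apply pair_inj in Heq; try apply enc_lt. destruct Heq as [H1 H3].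
    apply pair_inj in H1; try apply enc_lt. destruct H1 as [H1 H2].
    pose proof (enc_inj _ _ _ H1) as H1'. pose proof (enc_inj _ _ _ H3) as H3'. pose proof (enc_inj _ _ _ H2) as H2'. clear H1 H2 H3.
    assert (Hl : forall a b, (forall i, i < s -> P a i = P b i) -> (forall i, i < s -> D a i = D b i) ->
                 label_eq M Sigma a b).
    { intros a b HP HD; split; intros phi Hp; destruct (In_nth _ _ Bot Hp) as [i [Hi Hn]];
        rewrite <- Hn; apply asb_eq; [exact (HP i Hi)|exact (HD i Hi)]. }
    split; [apply Hl; auto|].
    assert (key : forall a b, (forall i, i < s -> P a i = P b i) ->
               (forall d, d < 2 ^ s -> Cs a d = Cs b d) ->
               forall u, clus M a u -> exists u', clus M b u' /\ label_eq M Sigma u u').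
    { intros a b HP HC u Hu.
      assert (Hc : Cs a (eD u) = true) by (apply asbP; eauto).
      rewrite HC in Hc by apply enc_lt. apply (proj1 (asbP _)) in Hc.
      destruct Hc as [u' [Hu' He]]. exists u'; split; auto.
      apply Hl.
      - intros i Hi. pose proof (asb_eq _ _ (HP i Hi)) as Hab. unfold P. apply asb_ext.
        destruct Hu as [Hu1 Hu2], Hu' as [Hu1' Hu2']; split; intro Hs.
        + apply (persist _ _ b); auto. apply Hab. apply (persist _ _ u); auto.
        + apply (persist _ _ a); auto. apply Hab. apply (persist _ _ u'); auto.
      - unfold eD in He. apply enc_inj; auto. }
    split.
    + apply key; auto.
    + intros u' Hu'. destruct (key v w) with (u := u') as [u [Hx Rx]]; auto.
      intros; symmetry; auto. intros; symmetry; auto.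
      exists u; split; auto. apply (label_equiv M Sigma); auto.
Qed.

Lemma T_cover M Sigma k : cover (T M Sigma k) (NN (length Sigma) k).
Proof.
  induction k; simpl; [apply T0_cover|].
  apply step_cover; auto using T0_equiv, T_equiv, T0_cover.
Qed.

Definition hgt_le M (w : world M) m := forall c k, strict_chain M c k -> c 0 = w -> k <= m.

Lemma hgt_slt M w u m : slt M w u -> hgt_le M w (S m) -> hgt_le M u m.
Proof.
  intros Hs H c k Hc H0.
  set (c' := fun i => match i with 0 => w | S i => c i end).
  assert (S k <= S m); [|lia].
  apply (H c' (S k)); auto.
  intros i Hi; destruct i; simpl; [rewrite H0; auto|]. apply Hc; lia.
Qed.

Lemma hgt0 M w u : hgt_le M w 0 -> ~ slt M w u.
Proof.
  intros H Hs. set (c := fun i => match i with 0 => w | _ => u end).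
  assert (1 <= 0); [|lia]. apply (H c 1); auto. intros i Hi; destruct i; [exact Hs|lia].
Qed.

Lemma lift M Sigma m : forall w v, hgt_le M w m -> hgt_le M v m -> T M Sigma m w v -> T M Sigma (S m) w v.
Proof.
  induction m; intros w v Hw Hv HT.
  - split; auto. split.
    + intros u Hu; exfalso; exact (hgt0 _ _ _ Hw Hu).
    + intros u Hu; exfalso; exact (hgt0 _ _ _ Hv Hu).
  - destruct HT as [H0 [H1 H2]]. split; auto. split.
    + intros u Hu. destruct (H1 u Hu) as [u' [Hu' R]]. exists u'; split; auto.
      apply IHm; eauto using hgt_slt.
    + intros u' Hu'. destruct (H2 u' Hu') as [u [Hu R]]. exists u; split; auto.
      apply IHm; eauto using hgt_slt.
Qed.

Lemma F_mono {W} (R nx : W -> W -> Prop) w v w' v' :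
  (forall u, nx w' u -> nx w u) -> (forall u, nx w u -> nx w' u) ->
  (forall u, nx v' u -> nx v u) -> (forall u, nx v u -> nx v' u) ->
  F R nx w v -> F R nx w' v'.
Proof.
  intros A1 A2 B1 B2 [H1 H2]; split.
  - intros u Hu; destruct (H1 u (A1 u Hu)) as [x [Hx Rx]]; eauto.
  - intros u Hu; destruct (H2 u (B1 u Hu)) as [x [Hx Rx]]; eauto.
Qed.

Lemma clus_inv M w w' u : clus M w w' -> (clus M w' u -> clus M w u) /\ (clus M w u -> clus M w' u).
Proof. intros [A B]; unfold clus; split; intros [C D]; split; eauto using ile_trans. Qed.
Lemma slt_inv M w w' u : clus M w w' -> (slt M w' u -> slt M w u) /\ (slt M w u -> slt M w' u).
Proof.
  intros [A B]; unfold slt; split; intros [C D]; split; eauto using ile_trans.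
Qed.

Lemma T_inv M Sigma k w v w' v' : clus M w w' -> clus M v v' -> label_eq M Sigma w' v' ->
  T M Sigma k w v -> T M Sigma k w' v'.
Proof.
  intros Cw Cv L HT.
  assert (H0 : T0 M Sigma w' v').
  { destruct (T_T0 _ _ _ _ _ HT) as [_ HF]. split; auto.
    eapply F_mono; [| | | |exact HF]; intros u Hu;
      first [apply (clus_inv M w w'); auto|apply (clus_inv M v v'); auto]. }
  destruct k; simpl in *; auto.
  destruct HT as [_ HF]; split; auto.
  eapply F_mono; [| | | |exact HF]; intros u Hu;
    first [apply (slt_inv M w w'); auto|apply (slt_inv M v v'); auto].
Qed.

Lemma T_bisim M Sigma n : model_height M n -> bisimulation M Sigma (T M Sigma n).
Proof.
  intros [Hh _].
  assert (Hg : forall w, hgt_le M w n) by (intros w c k Hc _; eauto).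
  destruct (T_equiv M Sigma n) as [Sy Tr].
  assert (fw : forward_confluent M (T M Sigma n)).
  { intros w w' v Hww' HT.
    destruct (classic (ile M w' w)) as [Hb|Hb].
    - destruct (T_T0 _ _ _ _ _ HT) as [_ [HF _]].
      destruct (HF w' (conj Hww' Hb)) as [v' [Cv L]].
      exists v'; split; [apply Cv|]. eapply T_inv; eauto. split; auto.
    - assert (Hs : slt M w w') by (split; auto).
      destruct n as [|m].
      + exfalso; exact (hgt0 _ _ _ (Hg w) Hs).
      + destruct HT as [_ [HF _]]. destruct (HF w' Hs) as [v' [Hv' R]].
        exists v'; split; [apply Hv'|]. apply lift; auto; eapply hgt_slt; eauto. }
  split; [exact fw|split].
  - intros w v v' HT Hv. destruct (fw v v' w Hv (Sy _ _ HT)) as [w' [Hw' R]]. eauto.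
  - intros w v HT. apply (T_T0 _ _ _ _ _ HT).
Qed.

Lemma two_b b : b + b <= 2 ^ b.
Proof.
  assert (H : forall b, S b + S b <= 2 ^ S b).
  { induction b0; simpl in *; [lia|]. assert (1 <= 2 ^ b0) by (apply Nat.neq_0_lt_0, Nat.pow_nonzero; lia). lia. }
  destruct b; [simpl; lia|apply H].
Qed.

Lemma sexp_ge x m : 2 ^ x <= sexp x (S m).
Proof.
  induction m; simpl; [lia|]. simpl in IHm.
  pose proof (Nat.pow_gt_lin_r 2 (2 ^ sexp x m) ltac:(lia)). lia.
Qed.

Lemma sexp_mono x x' m : x <= x' -> sexp x m <= sexp x' m.
Proof. intros H; induction m; simpl; auto. apply Nat.pow_le_mono_r; lia. Qed.

Lemma sexp_double y m : 2 * sexp y (S m) <= sexp (S y) (S m).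
Proof.
  induction m.
  - simpl. lia.
  - change (sexp (S y) (S (S m))) with (2 ^ sexp (S y) (S m)).
    change (sexp y (S (S m))) with (2 ^ sexp y (S m)).
    assert (H1 : 2 ^ (sexp y (S m) + sexp y (S m)) <= 2 ^ sexp (S y) (S m))
      by (apply Nat.pow_le_mono_r; lia).
    rewrite Nat.pow_add_r in H1.
    assert (H2 : 2 ^ 1 <= 2 ^ sexp y (S m)).
    { apply Nat.pow_le_mono_r; [lia|]. pose proof (sexp_ge y m).
      pose proof (Nat.pow_nonzero 2 y ltac:(lia)). lia. }
    simpl (2 ^ 1) in H2. revert H1 H2. generalize (2 ^ sexp y (S m)) (2 ^ sexp (S y) (S m)). intros; nia.
Qed.

Lemma NN_bound s : 1 <= s -> forall k, NN s k <= sexp (2 * (k + 1) * s) (S (S k)).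
Proof.
  intros Hs.
  assert (Ha : forall x, s + s <= x -> s + s + 2 ^ s <= 2 ^ x).
  { intros x Hx. assert (H1 : s < 2 ^ s) by (apply Nat.pow_gt_lin_r; lia).
    assert (H2 : 2 <= 2 ^ s) by (pose proof (Nat.pow_le_mono_r 2 1 s ltac:(lia) Hs) as Hq; simpl in Hq; lia).
    assert (H3 : 2 ^ (s + s) <= 2 ^ x) by (apply Nat.pow_le_mono_r; lia).
    rewrite Nat.pow_add_r in H3. revert H1 H2 H3. generalize (2 ^ s) (2 ^ x). intros t y H1 H2 H3.
    destruct (Nat.eq_dec t 2); [subst; lia|]. nia. }
  assert (HN0 : N0 s = 2 ^ (s + s + 2 ^ s)) by (unfold N0; rewrite !Nat.pow_add_r; lia).
  induction k.
  - simpl NN. rewrite HN0. simpl. apply Nat.pow_le_mono_r; [lia|]. apply Ha; lia.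
  - simpl NN. rewrite HN0, <- Nat.pow_add_r.
    change (sexp (2 * (S k + 1) * s) (S (S (S k)))) with (2 ^ sexp (2 * (S k + 1) * s) (S (S k))).
    apply Nat.pow_le_mono_r; [lia|].
    pose proof (sexp_ge (2 * (k + 1) * s) (S k)).
    pose proof (Ha (2 * (k + 1) * s) ltac:(nia)).
    pose proof (sexp_double (2 * (k + 1) * s) (S k)).
    pose proof (sexp_mono (S (2 * (k + 1) * s)) (2 * (S k + 1) * s) (S (S k)) ltac:(nia)).
    lia.
Qed.

Theorem mainTheorem12 (M : model) (n s : nat) (Sigma : list form) :
  model_height M n ->
  NoDup Sigma -> length Sigma = s ->
  forall (k : nat) (f : nat -> world M),
    (forall i j, i < k -> j < k -> bisim_equiv M Sigma (f i) (f j) -> i = j) ->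
    k <= sexp (2 * (n + 1) * s) (n + 2).
Proof.
  intros Hh _ Hs k f Hf.
  destruct s as [|s'].
  - assert (k <= 1).
    { destruct (le_lt_dec k 1) as [|Hk]; auto.
      assert (0 = 1); [|lia]. apply Hf; try lia.
      exists (fun _ _ => True); split; auto.
      destruct Sigma; [|discriminate].
      split; [|split].
      + intros w w' v _ _; exists v; split; auto; apply ile_refl.
      + intros w v v' _ _; exists w; split; auto; apply ile_refl.
      + intros w v _; split; intros phi Hp; destruct Hp. }
    replace (n + 2) with (S (S n)) by lia.
    pose proof (sexp_ge (2 * (n + 1) * 0) (S n)).
    pose proof (Nat.pow_nonzero 2 (2 * (n + 1) * 0) ltac:(lia)). lia.
  - set (s := S s') in *.
    destruct (T_cover M Sigma n) as [l [Hl Cl]].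
    set (h := fun i => proj1_sig (constructive_indefinite_description _ (Cl (f i)))).
    assert (Hhl : forall i, exists v, nth_error l (h i) = Some v /\ T M Sigma n (f i) v).
    { intros i; unfold h; destruct (constructive_indefinite_description _ (Cl (f i))) as [j Hj]; exact Hj. }
    assert (Hk : k <= length l).
    { rewrite <- (length_seq k 0), <- (length_map h), <- (length_seq (length l) 0).
      apply NoDup_incl_length.
      - apply NoDup_map_NoDup_ForallPairs; [|apply seq_NoDup].
        intros i j Hi Hj He. apply in_seq in Hi, Hj. apply Hf; try lia.
        destruct (Hhl i) as [x [Hx Rx]], (Hhl j) as [y [Hy Ry]].
        rewrite He, Hy in Hx. inversion Hx; subst.
        exists (T M Sigma n); split; [apply T_bisim; auto|].
        destruct (T_equiv M Sigma n) as [Sy Tr]; eauto.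
      - intros a Ha. apply in_map_iff in Ha. destruct Ha as [i [<- _]].
        destruct (Hhl i) as [x [Hx _]]. apply in_seq. split; [lia|].
        assert (h i < length l) by (apply nth_error_Some; congruence). lia. }
    rewrite Hs in Hl.
    pose proof (NN_bound s ltac:(unfold s; lia) n).
    replace (n + 2) with (S (S n)) by lia. lia.
Qed.
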